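(* The functions $(x,t)\mapsto F(x,t)$ and $(x,t)\mapsto G(x,t)$ are locally Lipschitz continuous on $[0,\infty)\times[0,\infty)$.
   Context: Standing assumptions: $u_0,u_b:[0,\infty)\to\mathbb{R}$ bounded measurable with $u_b>0$; $\rho_0,\rho_b:[0,\infty)\to(0,\infty)$ positive locally bounded measurable. For $x,t,y,\tau\ge0$: $F(y,x,t)=\int_0^y[tu_0(\eta)+\eta-x]\rho_0(\eta)\,d\eta$, $G(\tau,x,t)=\int_0^\tau[x-u_b(\eta)(t-\eta)]\rho_b(\eta)u_b(\eta)\,d\eta$, and $F(x,t)=\min_{y\ge0}F(y,x,t)$, $G(x,t)=\min_{\tau\ge0}G(\tau,x,t)$ (the minima are attained). *)

(* Defs.v *)
From HB Require Import structures.
From mathcomp Require Import all_boot all_order all_algebra.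
From mathcomp Require Import all_classical all_reals all_analysis.
Set Implicit Arguments. Unset Strict Implicit. Unset Printing Implicit Defensive.
Import Order.TTheory GRing.Theory Num.Theory.
Local Open Scope classical_set_scope.
Local Open Scope ring_scope.

Definition int0 (R : realType) (a : R) (f : R -> R) : R :=
  Rintegral (@lebesgue_measure R) `[0, a] f.

Definition Fyxt (R : realType) (u0 rho0 : R -> R) (y x t : R) : R :=
  int0 y (fun eta => (t * u0 eta + eta - x) * rho0 eta).

Definition Gtxt (R : realType) (ub rhob : R -> R) (tau x t : R) : R :=
  int0 tau (fun eta => (x - ub eta * (t - eta)) * rhob eta * ub eta).

(* F(x,t) = min_{y >= 0} F(y,x,t), G(x,t) = min_{tau >= 0} G(tau,x,t);
   the minima are attained, so they coincide with the infima. *)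
Definition Fxt (R : realType) (u0 rho0 : R -> R) (x t : R) : R :=
  inf [set Fyxt u0 rho0 y x t | y in `[0, +oo[].

Definition Gxt (R : realType) (ub rhob : R -> R) (x t : R) : R :=
  inf [set Gtxt ub rhob tau x t | tau in `[0, +oo[].

Definition locally_lipschitz_quadrant (R : realType) (f : R -> R -> R) : Prop :=
  forall x0 t0 : R, 0 <= x0 -> 0 <= t0 ->
  exists r : R, 0 < r /\ exists L : R, 0 <= L /\
    forall x t x' t' : R,
      0 <= x -> 0 <= t -> 0 <= x' -> 0 <= t' ->
      `|x - x0| < r -> `|t - t0| < r -> `|x' - x0| < r -> `|t' - t0| < r ->
      `|f x t - f x' t'| <= L * (`|x - x'| + `|t - t'|).

Definition bounded_on_nonneg (R : realType) (f : R -> R) : Prop :=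
  exists M : R, forall x : R, 0 <= x -> `|f x| <= M.

Definition locally_bounded_on_nonneg (R : realType) (f : R -> R) : Prop :=
  forall b : R, exists M : R, forall x : R, 0 <= x -> x <= b -> `|f x| <= M.

(* Main.v *)
Require Import Defs.
From HB Require Import structures.
From mathcomp Require Import all_boot all_order all_algebra.
From mathcomp Require Import all_classical all_reals all_analysis.
From mathcomp Require Import ring lra.
Import Order.TTheory GRing.Theory Num.Theory.
Local Open Scope classical_set_scope.
Local Open Scope ring_scope.

Section S.
Set Implicit Arguments.
Variable R : realType.
Notation mu := (@lebesgue_measure R).

Lemma int_integrable (f : R -> R) (a B : R) :
  measurable_fun `[0, a] f -> (forall e, 0 <= e -> e <= a -> `|f e| <= B) ->
  mu.-integrable `[0, a] (EFin \o f).
Proof.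
move=> mf fB; apply: measurable_bounded_integrable => //.
  rewrite /= lebesgue_measure_itv; case: ifP => _ //; by rewrite ltry.
exists B; split; first exact: num_real.
move=> M BM x; rewrite /= in_itv /= => /andP[x0 xa].
by rewrite (le_trans (fB _ x0 xa)) // ltW.
Qed.

Lemma int_bound (f : R -> R) (a B : R) : 0 <= a ->
  measurable_fun `[0, a] f -> (forall e, 0 <= e -> e <= a -> `|f e| <= B) ->
  `|int0 a f| <= a * B.
Proof.
move=> a0 mf fB; have fi := @int_integrable f a B mf fB.
rewrite /int0; apply: le_trans; first exact: le_normr_Rintegral.
apply: (le_trans (@le_Rintegral _ _ _ mu `[0, a] (fun x => `|f x|) (fun=> B) _ _ _ _)) => //.
  - exact: integrable_norm.
  - apply: (@int_integrable _ a `|B|) => //; exact: measurable_cst.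
  - by move=> x; rewrite /= in_itv /= => /andP[x0 xa]; exact: fB.
rewrite Rintegral_cst // /= lebesgue_measure_itv /=.
case: ifP => h /=; first by rewrite subr0 mulrC.
have -> : a = 0 by apply/eqP; rewrite eq_le a0 andbT; move: h; rewrite lte_fin => /negbT; rewrite -leNgt.
by rewrite !mul0r mulr0.
Qed.

Lemma int_mono (f : R -> R) (K y : R) : 0 <= K -> K <= y ->
  mu.-integrable `[0, y] (EFin \o f) -> (forall e, K <= e -> 0 <= f e) ->
  int0 K f <= int0 y f.
Proof.
move=> K0 Ky fi fp; rewrite -subr_ge0 /int0 Rintegral_itvB //.
- apply: Rintegral_ge0 => x; rewrite /= in_itv /= => /andP[Kx _].
  by apply: fp; rewrite ltW.
Qed.


Section Key.
Variables (h : R -> R -> R -> R) (D : R -> R -> Prop) (K L : R).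
Hypothesis K0 : 0 <= K.
Hypothesis L0 : 0 <= L.
Hypothesis hm : forall x t (a : R), D x t -> measurable_fun `[0, a] (fun e => h e x t).
Hypothesis hb : forall x t (a : R), D x t -> exists B, forall e, 0 <= e -> e <= a -> `|h e x t| <= B.
Hypothesis hpos : forall x t e, D x t -> K <= e -> 0 <= h e x t.
Hypothesis hlip : forall x t x' t' e, D x t -> D x' t' -> 0 <= e -> e <= K ->
  `|h e x t - h e x' t'| <= L * (`|x - x'| + `|t - t'|).

Definition Phi x t := inf [set int0 y (fun e => h e x t) | y in `[0, +oo[].

Lemma hint x t (a : R) : D x t -> mu.-integrable `[0, a] (EFin \o (fun e => h e x t)).
Proof.
move=> Dxt; have [B hB] := hb a Dxt.
exact: (@int_integrable _ a B (hm a Dxt) hB).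
Qed.

Lemma Phi_lb x t : D x t -> has_lbound [set int0 y (fun e => h e x t) | y in `[0, +oo[].
Proof.
move=> Dxt; have [B hB] := hb K Dxt.
have B0 : 0 <= B by apply: le_trans (hB 0 (lexx _) K0).
have bnd y : 0 <= y -> y <= K -> - (K * B) <= int0 y (fun e => h e x t).
  move=> y0 yK; have := @int_bound (fun e => h e x t) y B y0 (hm y Dxt).
  move=> /(_ (fun e e0 ey => hB e e0 (le_trans ey yK))).
  rewrite ler_norml => /andP[+ _]; apply: le_trans.
  by rewrite lerN2 ler_wpM2r.
exists (- (K * B)) => z [y]; rewrite /= in_itv /= andbT => y0 <-.
have [yK|Ky] := leP y K; first exact: bnd.
apply: le_trans (bnd K K0 (lexx _)) _.
apply: int_mono => //; first exact: ltW.
  exact: hint.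
by move=> e Ke; exact: hpos.
Qed.

Lemma diff_le x t x' t' y : D x t -> D x' t' -> 0 <= y -> y <= K ->
  int0 y (fun e => h e x t) <= int0 y (fun e => h e x' t') + K * L * (`|x - x'| + `|t - t'|).
Proof.
move=> D1 D2 y0 yK; rewrite -lerBlDl.
rewrite /int0 -RintegralB //; try exact: hint.
have := @int_bound (fun e => h e x t - h e x' t') y (L * (`|x - x'| + `|t - t'|)) y0.
move=> /(_ (measurable_realfun.measurable_funB (hm y D1) (hm y D2))).
move=> /(_ (fun e e0 ey => @hlip x t x' t' e D1 D2 e0 (le_trans ey yK))).
move=> /(le_trans (ler_norm _)) /le_trans; apply.
rewrite -mulrA ler_wpM2r //.
by rewrite mulr_ge0 // addr_ge0.
Qed.

Lemma Phi_le x t x' t' : D x t -> D x' t' ->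
  Phi x t <= Phi x' t' + K * L * (`|x - x'| + `|t - t'|).
Proof.
move=> D1 D2; rewrite -lerBlDr; apply: lb_le_inf.
  by exists (int0 0 (fun e => h e x' t')), 0 => //=; rewrite in_itv /= lexx.
move=> z [y]; rewrite /= in_itv /= andbT => y0 <-.
rewrite lerBlDr.
have inS (w : R) : 0 <= w -> Phi x t <= int0 w (fun e => h e x t).
  by move=> w0; rewrite /Phi; apply: (ge_inf (Phi_lb D1)); exists w => //=; rewrite in_itv /= w0.
have [yK|Ky] := leP y K.
  by apply: le_trans (inS y y0) _; exact: diff_le.
apply: le_trans (inS K K0) _; apply: le_trans (@diff_le x t x' t' K D1 D2 K0 (lexx _)) _.
rewrite lerD2r; apply: int_mono => //; first exact: ltW.
  exact: hint.
by move=> e Ke; exact: hpos.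
Qed.

Lemma Phi_lip x t x' t' : D x t -> D x' t' ->
  `|Phi x t - Phi x' t'| <= K * L * (`|x - x'| + `|t - t'|).
Proof.
move=> D1 D2; rewrite ler_norml; apply/andP; split.
  rewrite lerNl opprB lerBlDl (distrC x) (distrC t); exact: Phi_le.
by rewrite lerBlDl; exact: Phi_le.
Qed.
End Key.
End S.

Lemma t2 (R : realType) (dx dt u p M P: R) : `|u| <= M -> `|p| <= P ->
  `|(dt * u - dx) * p| <= (M + 1) * P * (`|dx| + `|dt|).
Proof.
move=> hu hp.
have M0 : 0 <= M := le_trans (normr_ge0 _) hu.
have P0 : 0 <= P := le_trans (normr_ge0 _) hp.
have H : `|dt * u - dx| <= `|dt| * M + `|dx|.
  apply: le_trans (ler_normB _ _) _; rewrite normrM lerD2r.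
  by rewrite ler_wpM2l.
rewrite normrM; apply: le_trans (ler_pM (normr_ge0 _) (normr_ge0 _) H hp) _.
have := mulr_ge0 P0 (normr_ge0 dt). have := mulr_ge0 (mulr_ge0 P0 M0) (normr_ge0 dx).
lra.
Qed.

Lemma mul_bnd (R : realType) (a b M N : R) : `|a| <= M -> `|b| <= N -> `|a * b| <= M * N.
Proof. by move=> ha hb; rewrite normrM; apply: ler_pM. Qed.

Arguments mul_bnd {R a b M N}.
Arguments t2 {R dx dt u p M P}.

Lemma sub_itv0 (R : realType) (a : R) : `[0, a] `<=` `[0, +oo[.
Proof. by move=> z; rewrite /= !in_itv /= => /andP[-> _]. Qed.

Lemma mS (R : realType) (f : R -> R) (a : R) :
  measurable_fun (`[0, +oo[ : set R) f -> measurable_fun (`[0, a] : set R) f.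
Proof. by move=> mf; apply: measurable_funS mf => //; exact: sub_itv0. Qed.

Theorem lemma2p5 (R : realType) (u0 ub rho0 rhob : R -> R)
  (mu0 : measurable_fun (`[0, +oo[ : set R) u0) (bu0 : bounded_on_nonneg u0)
  (mub : measurable_fun (`[0, +oo[ : set R) ub) (bub : bounded_on_nonneg ub)
  (ub_pos : forall x : R, 0 <= x -> 0 < ub x)
  (mrho0 : measurable_fun (`[0, +oo[ : set R) rho0) (lbrho0 : locally_bounded_on_nonneg rho0)
  (rho0_pos : forall x : R, 0 <= x -> 0 < rho0 x)
  (mrhob : measurable_fun (`[0, +oo[ : set R) rhob) (lbrhob : locally_bounded_on_nonneg rhob)
  (rhob_pos : forall x : R, 0 <= x -> 0 < rhob x) :
  locally_lipschitz_quadrant (Fxt u0 rho0) /\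
  locally_lipschitz_quadrant (Gxt ub rhob).
Proof.
split.
- move=> x0 t0 hx0 ht0.
  have [M0 hM0] := bu0.
  have M00 : 0 <= M0 := le_trans (normr_ge0 _) (hM0 0 (lexx _)).
  have K0 : 0 <= x0 + 1 + (t0 + 1) * M0.
    by rewrite addr_ge0 ?mulr_ge0 ?addr_ge0.
  have [P hP] := lbrho0 (x0 + 1 + (t0 + 1) * M0).
  have P0 : 0 <= P := le_trans (normr_ge0 _) (hP 0 (lexx _) K0).
  pose D := fun x t : R => [/\ 0 <= x, x < x0 + 1, 0 <= t & t < t0 + 1].
  pose h := fun e x t : R => (t * u0 e + e - x) * rho0 e.
  have hm : forall x t (a : R), D x t -> measurable_fun `[0, a] (fun e => h e x t).
    move=> x t a _; rewrite /h.
    apply: measurable_realfun.measurable_funM; last exact: mS mrho0.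
    apply: measurable_realfun.measurable_funB; last exact: measurable_cst.
    apply: measurable_realfun.measurable_funD; last exact: measurable_id.
    apply: measurable_realfun.measurable_funM; first exact: measurable_cst.
    exact: mS mu0.
  have hb : forall x t (a : R), D x t ->
      exists B, forall e, 0 <= e -> e <= a -> `|h e x t| <= B.
    move=> x t a [hx xX ht tT]; have [P' hP'] := lbrho0 a.
    exists (((t0 + 1) * M0 + `|a| + (x0 + 1)) * P') => e e0 ea.
    apply: mul_bnd (hP' e e0 ea).
    have : `|t * u0 e| <= (t0 + 1) * M0.
      rewrite normrM ger0_norm //; apply: ler_pM => //; [exact: ltW | exact: hM0].
    rewrite ler_norml => /andP[h1 h2].
    have ha := ler_norm a; rewrite ler_norml; apply/andP; split; lra.
  have hpos : forall x t e, D x t -> x0 + 1 + (t0 + 1) * M0 <= e -> 0 <= h e x t.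
    move=> x t e [hx xX ht tT] Ke; have e0 : 0 <= e := le_trans K0 Ke.
    apply: mulr_ge0; last exact: ltW (rho0_pos _ e0).
    have : `|t * u0 e| <= (t0 + 1) * M0.
      rewrite normrM ger0_norm //; apply: ler_pM => //; [exact: ltW | exact: hM0].
    rewrite ler_norml => /andP[h1 h2].
    lra.
  have hlip : forall x t x' t' e, D x t -> D x' t' -> 0 <= e ->
      e <= x0 + 1 + (t0 + 1) * M0 ->
      `|h e x t - h e x' t'| <= ((M0 + 1) * P) * (`|x - x'| + `|t - t'|).
    move=> x t x' t' e _ _ e0 eK.
    have -> : h e x t - h e x' t' = ((t - t') * u0 e - (x - x')) * rho0 e.
      by rewrite /h; ring.
    exact: t2 (hM0 e e0) (hP e e0 eK).
  exists 1; split => //; exists ((x0 + 1 + (t0 + 1) * M0) * ((M0 + 1) * P)).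
  split; first by rewrite !mulr_ge0 // addr_ge0.
  move=> x t x' t' hx ht hx' ht' d1 d2 d3 d4.
  have Dx : D x t.
    split=> //.
      by move: d1; rewrite ltr_distl => /andP[_].
    by move: d2; rewrite ltr_distl => /andP[_].
  have Dx' : D x' t'.
    split=> //.
      by move: d3; rewrite ltr_distl => /andP[_].
    by move: d4; rewrite ltr_distl => /andP[_].
  have L0 : 0 <= (M0 + 1) * P by rewrite mulr_ge0 // addr_ge0.
  exact: (@Phi_lip R h D _ _ K0 L0 hm hb hpos hlip x t x' t' Dx Dx').
- move=> x0 t0 hx0 ht0.
  have [Mb hMb] := bub.
  have Mb0 : 0 <= Mb := le_trans (normr_ge0 _) (hMb 0 (lexx _)).
  have K0 : 0 <= t0 + 1 by rewrite addr_ge0.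
  have [P hP] := lbrhob (t0 + 1).
  have P0 : 0 <= P := le_trans (normr_ge0 _) (hP 0 (lexx _) K0).
  pose D := fun x t : R => [/\ 0 <= x, x < x0 + 1, 0 <= t & t < t0 + 1].
  pose h := fun e x t : R => (x - ub e * (t - e)) * rhob e * ub e.
  have hm : forall x t (a : R), D x t -> measurable_fun `[0, a] (fun e => h e x t).
    move=> x t a _; rewrite /h.
    apply: measurable_realfun.measurable_funM; last exact: mS mub.
    apply: measurable_realfun.measurable_funM; last exact: mS mrhob.
    apply: measurable_realfun.measurable_funB; first exact: measurable_cst.
    apply: measurable_realfun.measurable_funM; first exact: mS mub.
    apply: measurable_realfun.measurable_funB; first exact: measurable_cst.
    exact: measurable_id.
  have hb : forall x t (a : R), D x t ->
      exists B, forall e, 0 <= e -> e <= a -> `|h e x t| <= B.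
    move=> x t a [hx xX ht tT]; have [P' hP'] := lbrhob a.
    exists ((x0 + 1 + Mb * (t0 + 1 + `|a|)) * P' * Mb) => e e0 ea.
    apply: mul_bnd (hMb e e0); apply: mul_bnd (hP' e e0 ea).
    have hq : `|t - e| <= t0 + 1 + `|a|.
      have ha := ler_norm a; rewrite ler_norml; apply/andP; split; lra.
    have := mul_bnd (hMb e e0) hq.
    rewrite ler_norml => /andP[h1 h2].
    rewrite ler_norml; apply/andP; split; lra.
  have hpos : forall x t e, D x t -> t0 + 1 <= e -> 0 <= h e x t.
    move=> x t e [hx xX ht tT] Ke; have e0 : 0 <= e := le_trans K0 Ke.
    apply: mulr_ge0; last exact: ltW (ub_pos _ e0).
    apply: mulr_ge0; last exact: ltW (rhob_pos _ e0).
    rewrite subr_ge0; apply: le_trans hx.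
    apply: mulr_ge0_le0; first exact: ltW (ub_pos _ e0).
    rewrite subr_le0; lra.
  have hlip : forall x t x' t' e, D x t -> D x' t' -> 0 <= e ->
      e <= t0 + 1 ->
      `|h e x t - h e x' t'| <= ((Mb + 1) * (P * Mb)) * (`|x - x'| + `|t - t'|).
    move=> x t x' t' e _ _ e0 eK.
    have -> : h e x t - h e x' t' = ((t' - t) * ub e - (x' - x)) * (rhob e * ub e).
      by rewrite /h; ring.
    rewrite (distrC x) (distrC t).
    exact: t2 (hMb e e0) (mul_bnd (hP e e0 eK) (hMb e e0)).
  exists 1; split => //; exists ((t0 + 1) * ((Mb + 1) * (P * Mb))).
  split; first by rewrite !mulr_ge0 // addr_ge0.
  move=> x t x' t' hx ht hx' ht' d1 d2 d3 d4.
  have Dx : D x t.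
    split=> //.
      by move: d1; rewrite ltr_distl => /andP[_].
    by move: d2; rewrite ltr_distl => /andP[_].
  have Dx' : D x' t'.
    split=> //.
      by move: d3; rewrite ltr_distl => /andP[_].
    by move: d4; rewrite ltr_distl => /andP[_].
  have L0 : 0 <= (Mb + 1) * (P * Mb) by rewrite !mulr_ge0 // addr_ge0.
  exact: (@Phi_lip R h D _ _ K0 L0 hm hb hpos hlip x t x' t' Dx Dx').
Qed.
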